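(* Let $r$ be a right reflection point of $\mathrm{OPT}$ with incident legs $\ell,\ell'$, where $\ell$ is above $\ell'$. Let $P_1$ and $P_2$ be subpaths of $\mathrm{OPT}$, both starting at $r$ and both of shadow $1$, with $\ell\in P_1$ and $\ell'\in P_2$. If there is a vertical line $\Gamma$ with $x(\Gamma)>x(r)$ crossing both $P_1$ and $P_2$, then $P_1$ is above $P_2$ in the range $[x(r),x(\Gamma)]$.
   Context: Instance: vertical line segments $s_1,\dots,s_n$ in $\mathbb{R}^2$, each of length $1$, with pairwise distinct $x$-coordinates. A tour is a cyclic sequence of points $p_1,\dots,p_\sigma$, each on some segment, with every segment containing at least one $p_j$; the straight segments joining consecutive points are legs. $\mathrm{OPT}$ is a fixed minimum-cost tour, oriented, with no two consecutive points on the same segment (no vertical legs) and not self-crossing. A point $p_j$ of $\mathrm{OPT}$ on segment $s$ is a right reflection point if both of its incident legs lie in the half-plane $x\ge x(s)$. A leg $\ell$ incident to a reflection point is above the other incident leg $\ell'$ if (apart from their common point) all points of $\ell$ have larger $y$-coordinate than all points of $\ell'$. Shadow of a path: the maximum, over vertical lines, of the number of its legs intersecting the line. A path $P_1$ is above a path $P_2$ in a range $I=[x_0,x_1]$ if for every vertical line $\Gamma'$ with $x(\Gamma')\in I$, the top-most intersection point of $\Gamma'$ with $P_1\cup P_2$ lies on $P_1$. *)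

(* Defs.v *)
From Stdlib Require Import Reals Lra ZArith.
Open Scope R_scope.

Definition point := (R * R)%type.

(* Instance: n vertical segments; segment i is {(sx i, y) | sy i <= y <= sy i + 1}. *)
Definition distinct_x (n : nat) (sx : nat -> R) : Prop :=
  forall i j, (i < n)%nat -> (j < n)%nat -> i <> j -> sx i <> sx j.

Definition on_seg (sx sy : nat -> R) (i : nat) (q : point) : Prop :=
  fst q = sx i /\ sy i <= snd q <= sy i + 1.

(* A tour is a cyclic sequence p 0, ..., p (sigma-1); cyclic indexing by Z. *)
Definition pt (sigma : nat) (p : nat -> point) (j : Z) : point :=
  p (Z.to_nat (Z.modulo j (Z.of_nat sigma))).

Definition is_tour (n : nat) (sx sy : nat -> R) (sigma : nat) (p : nat -> point) : Prop :=
  (0 < sigma)%nat /\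
  (forall i, (i < sigma)%nat -> exists s, (s < n)%nat /\ on_seg sx sy s (p i)) /\
  (forall s, (s < n)%nat -> exists i, (i < sigma)%nat /\ on_seg sx sy s (p i)).

Definition dist (a b : point) : R :=
  sqrt ((fst a - fst b) ^ 2 + (snd a - snd b) ^ 2).

Fixpoint rsum (f : nat -> R) (m : nat) : R :=
  match m with O => 0 | S m' => rsum f m' + f m' end.

Definition cost (sigma : nat) (p : nat -> point) : R :=
  rsum (fun i => dist (p i) (pt sigma p (Z.of_nat i + 1))) sigma.

Definition on_leg (a b z : point) : Prop :=
  exists t, 0 <= t <= 1 /\
    z = (fst a + t * (fst b - fst a), snd a + t * (snd b - snd a)).

Definition orient (a b c : point) : R :=
  (fst b - fst a) * (snd c - snd a) - (snd b - snd a) * (fst c - fst a).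

(* the legs [a,b] and [c,d] cross (properly / transversally) *)
Definition legs_cross (a b c d : point) : Prop :=
  orient a b c * orient a b d < 0 /\ orient c d a * orient c d b < 0.

Definition not_self_crossing (sigma : nat) (p : nat -> point) : Prop :=
  forall i j, (i < sigma)%nat -> (j < sigma)%nat ->
    ~ legs_cross (p i) (pt sigma p (Z.of_nat i + 1))
                 (p j) (pt sigma p (Z.of_nat j + 1)).

(* OPT: a minimum-cost tour, with no two consecutive points on the same
   segment (hence no vertical legs), and not self-crossing. *)
Definition is_OPT (n : nat) (sx sy : nat -> R) (sigma : nat) (p : nat -> point) : Prop :=
  is_tour n sx sy sigma p /\
  (forall sigma' p', is_tour n sx sy sigma' p' -> cost sigma p <= cost sigma' p') /\
  (forall i s, (i < sigma)%nat -> (s < n)%nat ->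
     ~ (on_seg sx sy s (p i) /\ on_seg sx sy s (pt sigma p (Z.of_nat i + 1)))) /\
  (forall i, (i < sigma)%nat -> fst (p i) <> fst (pt sigma p (Z.of_nat i + 1))) /\
  not_self_crossing sigma p.

Definition right_reflection (n : nat) (sx sy : nat -> R) (sigma : nat)
    (p : nat -> point) (k : nat) : Prop :=
  exists s, (s < n)%nat /\ on_seg sx sy s (p k) /\
    forall z, on_leg (p k) (pt sigma p (Z.of_nat k + 1)) z \/
              on_leg (p k) (pt sigma p (Z.of_nat k - 1)) z ->
              fst z >= sx s.

Definition leg_above (r a b : point) : Prop :=
  forall z z', on_leg r a z -> z <> r -> on_leg r b z' -> z' <> r -> snd z > snd z'.

(* A path is a point sequence q 0, ..., q m with legs [q i, q (i+1)], i < m. *)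
Definition subpath (sigma : nat) (p : nat -> point) (k : Z) (fwd : bool) : nat -> point :=
  fun j => pt sigma p (if fwd then (k + Z.of_nat j)%Z else (k - Z.of_nat j)%Z).

Definition on_path (q : nat -> point) (m : nat) (z : point) : Prop :=
  exists i, (i < m)%nat /\ on_leg (q i) (q (S i)) z.

Definition crosses_line (q : nat -> point) (m : nat) (c : R) : Prop :=
  exists z, on_path q m z /\ fst z = c.

(* number of legs met by the vertical line x = c, counted for lines through
   the open x-range of the leg (i.e. generic vertical lines) *)
Fixpoint leg_count (q : nat -> point) (m : nat) (c : R) : nat :=
  match m with
  | O => O
  | S m' => (leg_count q m' c +
      (if Rlt_dec (Rmin (fst (q m')) (fst (q (S m')))) c then
         if Rlt_dec c (Rmax (fst (q m')) (fst (q (S m')))) then 1 else 0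
       else 0))%nat
  end.

Definition shadow_one (q : nat -> point) (m : nat) : Prop :=
  (forall c, (leg_count q m c <= 1)%nat) /\ exists c, leg_count q m c = 1%nat.

Definition path_above (q1 : nat -> point) (m1 : nat) (q2 : nat -> point) (m2 : nat)
    (x0 x1 : R) : Prop :=
  forall c, x0 <= c <= x1 ->
    exists z, on_path q1 m1 z /\ fst z = c /\
      forall z', (on_path q1 m1 z' \/ on_path q2 m2 z') -> fst z' = c -> snd z' <= snd z.

(* Main.v *)
Require Import Defs.
From Stdlib Require Import Reals ZArith Lra Lia Psatz List Classical.
Require Import Defs.
Import ListNotations.
Open Scope R_scope.

Lemma rsum_ext f g n : (forall i, (i < n)%nat -> f i = g i) -> rsum f n = rsum g n.
Proof.
  induction n; intros H; simpl; auto.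
  rewrite IHn by (intros; apply H; lia). rewrite H by lia. reflexivity.
Qed.

Lemma rsum_shift h n : rsum h (S n) = h 0%nat + rsum (fun j => h (S j)) n.
Proof.
  induction n; simpl in *; [lra|]. rewrite IHn. lra.
Qed.

Lemma rsum_rev f n : rsum f n = rsum (fun j => f (n - 1 - j)%nat) n.
Proof.
  induction n; [reflexivity|].
  change (rsum f (S n)) with (rsum f n + f n). rewrite IHn.
  rewrite (rsum_shift (fun j => f (S n - 1 - j)%nat)).
  replace (S n - 1 - 0)%nat with n by lia.
  rewrite Rplus_comm. f_equal. apply rsum_ext. intros i Hi. f_equal. lia.
Qed.

Lemma dist_sym a b : dist a b = dist b a.
Proof. unfold dist. f_equal. ring. Qed.

Fixpoint pc (l : list point) : R :=
  match l with
  | x :: ((y :: _) as l') => dist x y + pc l'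
  | _ => 0
  end.

Lemma pc_app2 l y Y : pc (l ++ y :: Y) = pc (l ++ [y]) + pc (y :: Y).
Proof.
  induction l as [|x l IH]; simpl; [lra|].
  destruct l as [|z l']; simpl in *; [lra|].
  rewrite IH. lra.
Qed.

Lemma pc_rev l : pc (rev l) = pc l.
Proof.
  assert (H : forall l x, pc (rev (x :: l)) = pc (x :: l)).
  { induction l0 as [|y l' IH]; intros x; [reflexivity|].
    change (rev (x :: y :: l')) with (rev (y :: l') ++ [x]).
    change (rev (y :: l')) with (rev l' ++ [y]).
    rewrite <- app_assoc. simpl app.
    rewrite pc_app2. change (rev l' ++ [y]) with (rev (y :: l')). rewrite IH. simpl. rewrite (dist_sym y x). lra. }
  destruct l; [reflexivity|]. apply H.
Qed.

Lemma pc_nth L d : pc L = rsum (fun i => dist (nth i L d) (nth (S i) L d)) (length L - 1).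
Proof.
  induction L as [|x L IH]; [reflexivity|].
  destruct L as [|y L']; [reflexivity|].
  change (pc (x :: y :: L')) with (dist x y + pc (y :: L')).
  rewrite IH. simpl length. replace (S (S (length L')) - 1)%nat with (S (length L')) by lia.
  rewrite rsum_shift. simpl nth at 1 2. f_equal.
  replace (S (length L') - 1)%nat with (length L') by lia. reflexivity.
Qed.

Lemma pc_map_seq (f : nat -> point) n a :
  pc (map f (seq a (S n))) = rsum (fun j => dist (f (a + j)%nat) (f (a + S j)%nat)) n.
Proof.
  revert a; induction n; intros a; [reflexivity|].
  change (seq a (S (S n))) with (a :: seq (S a) (S n)).
  change (map f (a :: seq (S a) (S n))) with (f a :: map f (seq (S a) (S n))).
  rewrite rsum_shift.
  change (seq (S a) (S n)) with (S a :: seq (S (S a)) n).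
  simpl map. change (pc (f a :: f (S a) :: map f (seq (S (S a)) n)))
    with (dist (f a) (f (S a)) + pc (f (S a) :: map f (seq (S (S a)) n))).
  change (f (S a) :: map f (seq (S (S a)) n)) with (map f (seq (S a) (S n))).
  rewrite IHn. rewrite Nat.add_0_r, Nat.add_1_r. f_equal.
  apply rsum_ext; intros i _. f_equal; f_equal; lia.
Qed.

Lemma pt_eq_mod sigma p z1 z2 :
  (z1 mod Z.of_nat sigma = z2 mod Z.of_nat sigma)%Z -> pt sigma p z1 = pt sigma p z2.
Proof. intros H; unfold pt; now rewrite H. Qed.

Lemma pt_periodic sigma p z : pt sigma p (z + Z.of_nat sigma)%Z = pt sigma p z.
Proof.
  apply pt_eq_mod. rewrite <- (Z.mul_1_l (Z.of_nat sigma)) at 1.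
  apply Z_mod_plus_full.
Qed.

Lemma pt_nat sigma p i : (i < sigma)%nat -> pt sigma p (Z.of_nat i) = p i.
Proof.
  intros H. unfold pt. rewrite Z.mod_small by lia. now rewrite Nat2Z.id.
Qed.

Lemma pt_is_p sigma p z : (0 < sigma)%nat -> exists i, (i < sigma)%nat /\ pt sigma p z = p i /\
   (Z.of_nat i = z mod Z.of_nat sigma)%Z.
Proof.
  intros H. exists (Z.to_nat (z mod Z.of_nat sigma)).
  pose proof (Z.mod_pos_bound z (Z.of_nat sigma) ltac:(lia)).
  split; [lia|]. split; [reflexivity|]. rewrite Z2Nat.id; lia.
Qed.

Lemma nonvert_z sigma p :
  (0 < sigma)%nat ->
  (forall i, (i < sigma)%nat -> fst (p i) <> fst (pt sigma p (Z.of_nat i + 1))) ->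
  forall z, fst (pt sigma p z) <> fst (pt sigma p (z + 1)%Z).
Proof.
  intros Hs H z. destruct (pt_is_p sigma p z Hs) as [i [Hi [E1 E2]]].
  rewrite E1. replace (pt sigma p (z + 1)%Z) with (pt sigma p (Z.of_nat i + 1)%Z).
  - apply H; auto.
  - apply pt_eq_mod. rewrite E2. apply Z.add_mod_idemp_l. lia.
Qed.

Lemma sub_true sigma p K j : subpath sigma p K true j = pt sigma p (K + Z.of_nat j)%Z.
Proof. reflexivity. Qed.
Lemma sub_false sigma p K j : subpath sigma p K false j = pt sigma p (K - Z.of_nat j)%Z.
Proof. reflexivity. Qed.

Lemma nonvert_sub sigma p K b :
  (0 < sigma)%nat ->
  (forall i, (i < sigma)%nat -> fst (p i) <> fst (pt sigma p (Z.of_nat i + 1))) ->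
  forall j, fst (subpath sigma p K b j) <> fst (subpath sigma p K b (S j)).
Proof.
  intros Hs H j. pose proof (nonvert_z sigma p Hs H) as Hz.
  destruct b.
  - rewrite !sub_true. replace (K + Z.of_nat (S j))%Z with (K + Z.of_nat j + 1)%Z by lia.
    apply Hz.
  - rewrite !sub_false. replace (K - Z.of_nat j)%Z with ((K - Z.of_nat (S j)) + 1)%Z by lia.
    intros E. apply (Hz (K - Z.of_nat (S j))%Z). now rewrite E.
Qed.

Lemma sub_neg sigma p K b j : (j <= sigma)%nat ->
  subpath sigma p K (negb b) j = subpath sigma p K b (sigma - j).
Proof.
  intros Hj. destruct b; simpl negb.
  - rewrite sub_false, sub_true. rewrite <- pt_periodic. f_equal. lia.
  - rewrite sub_false, sub_true. rewrite <- (pt_periodic sigma p (K - Z.of_nat (sigma - j))).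
    f_equal. lia.
Qed.

Lemma sub_0 sigma p K b : subpath sigma p K b 0 = pt sigma p K.
Proof. destruct b; unfold subpath; f_equal; lia. Qed.

Lemma sub_surj sigma p k b : (k < sigma)%nat ->
  forall i, (i < sigma)%nat -> exists j, (j < sigma)%nat /\ subpath sigma p (Z.of_nat k) b j = p i.
Proof.
  intros Hk i Hi. destruct b.
  - destruct (le_lt_dec k i).
    + exists (i - k)%nat. split; [lia|]. rewrite sub_true. rewrite <- pt_nat with (sigma := sigma) by auto.
      f_equal. lia.
    + exists (i + sigma - k)%nat. split; [lia|]. rewrite sub_true. rewrite <- pt_nat with (sigma := sigma) by auto.
      rewrite <- (pt_periodic sigma p (Z.of_nat i)). f_equal. lia.
  - destruct (le_lt_dec i k).
    + exists (k - i)%nat. split; [lia|]. rewrite sub_false. rewrite <- pt_nat with (sigma := sigma) by auto.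
      f_equal. lia.
    + exists (k + sigma - i)%nat. split; [lia|]. rewrite sub_false. rewrite <- pt_nat with (sigma := sigma) by auto.
      rewrite <- (pt_periodic sigma p (Z.of_nat k - Z.of_nat (k + sigma - i))). f_equal. lia.
Qed.

Lemma sub_is_p sigma p K b j : (0 < sigma)%nat -> exists i, (i < sigma)%nat /\ subpath sigma p K b j = p i.
Proof.
  intros Hs. unfold subpath. destruct (pt_is_p sigma p (if b then (K + Z.of_nat j)%Z else (K - Z.of_nat j)%Z) Hs)
    as [i [Hi [E _]]]. eauto.
Qed.

Definition gz sigma p (z : Z) := dist (pt sigma p z) (pt sigma p (z + 1)%Z).
Definition FF sigma p (a : Z) := rsum (fun j => gz sigma p (a + Z.of_nat j)%Z) sigma.

Lemma g_per sigma p z : gz sigma p (z + Z.of_nat sigma)%Z = gz sigma p z.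
Proof.
  unfold gz. rewrite pt_periodic. replace (z + Z.of_nat sigma + 1)%Z with ((z + 1) + Z.of_nat sigma)%Z by lia.
  now rewrite pt_periodic.
Qed.

Lemma F_succ sigma p a : (0 < sigma)%nat -> FF sigma p (a + 1)%Z = FF sigma p a.
Proof.
  intros Hs. unfold FF. destruct sigma as [|s] eqn:E; [lia|].
  rewrite (rsum_shift (fun j => gz (S s) p (a + Z.of_nat j)%Z)).
  change (rsum (fun j => gz (S s) p (a + 1 + Z.of_nat j)%Z) (S s)) with
    (rsum (fun j => gz (S s) p (a + 1 + Z.of_nat j)%Z) s + gz (S s) p (a + 1 + Z.of_nat s)%Z).
  replace (a + 1 + Z.of_nat s)%Z with (a + Z.of_nat (S s))%Z by lia.
  rewrite g_per. replace (a + Z.of_nat 0)%Z with a by lia.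
  rewrite Rplus_comm. f_equal. apply rsum_ext. intros i _. f_equal. lia.
Qed.

Lemma F_nat sigma p a n : (0 < sigma)%nat -> FF sigma p (a + Z.of_nat n)%Z = FF sigma p a.
Proof.
  intros Hs. induction n. { f_equal. lia. }
  replace (a + Z.of_nat (S n))%Z with ((a + Z.of_nat n) + 1)%Z by lia.
  now rewrite F_succ.
Qed.

Lemma F_const sigma p a : (0 < sigma)%nat -> FF sigma p a = FF sigma p 0%Z.
Proof.
  intros Hs. destruct (Z_le_gt_dec 0 a).
  - replace a with (0 + Z.of_nat (Z.to_nat a))%Z at 1 by lia. apply F_nat; auto.
  - rewrite <- (F_nat sigma p a (Z.to_nat (- a))) by auto. f_equal. lia.
Qed.

Lemma cost_F sigma p : cost sigma p = FF sigma p 0%Z.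
Proof.
  unfold cost, FF. apply rsum_ext. intros i Hi. unfold gz. replace (0 + Z.of_nat i)%Z with (Z.of_nat i) by lia. rewrite pt_nat by auto. reflexivity.
Qed.

Lemma cost_rot sigma p K b : (0 < sigma)%nat ->
  cost sigma p = rsum (fun j => dist (subpath sigma p K b j) (subpath sigma p K b (S j))) sigma.
Proof.
  intros Hs. rewrite cost_F. destruct b.
  - rewrite <- (F_const sigma p K) by auto. unfold FF. apply rsum_ext. intros i _. unfold gz.
    rewrite !sub_true. f_equal. f_equal. lia.
  - rewrite <- (F_const sigma p (K - Z.of_nat sigma)%Z) by auto. unfold FF.
    rewrite (rsum_rev (fun j => dist (subpath sigma p K false j) (subpath sigma p K false (S j)))).
    apply rsum_ext. intros i Hi. unfold gz. rewrite !sub_false. rewrite dist_sym. f_equal; f_equal; lia.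
Qed.

Definition incr (q : nat -> point) (m : nat) := forall j, (j < m)%nat -> fst (q j) < fst (q (S j)).

Definition ind (q : nat -> point) (j : nat) (c : R) : nat :=
  if Rlt_dec (Rmin (fst (q j)) (fst (q (S j)))) c then
    if Rlt_dec c (Rmax (fst (q j)) (fst (q (S j)))) then 1 else 0
  else 0.

Lemma leg_count_S q j c : leg_count q (S j) c = (leg_count q j c + ind q j c)%nat.
Proof. reflexivity. Qed.

Lemma leg_count_mono q c j m : (j <= m)%nat -> (leg_count q j c <= leg_count q m c)%nat.
Proof.
  induction 1; auto. rewrite leg_count_S. lia.
Qed.

Lemma ind_one q j c : (fst (q j) < c < fst (q (S j)) \/ fst (q (S j)) < c < fst (q j)) -> ind q j c = 1%nat.
Proof.
  intros H. unfold ind. unfold Rmin, Rmax.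
  destruct (Rle_dec (fst (q j)) (fst (q (S j)))); destruct (Rlt_dec _ c); try (exfalso; lra);
  destruct (Rlt_dec c _); try (exfalso; lra); reflexivity.
Qed.

Lemma leg_count_two q m c j j' : (j < j')%nat -> (j' < m)%nat -> ind q j c = 1%nat -> ind q j' c = 1%nat ->
  (2 <= leg_count q m c)%nat.
Proof.
  intros H1 H2 E1 E2.
  pose proof (leg_count_mono q c (S j') m ltac:(lia)).
  pose proof (leg_count_mono q c (S j) j' ltac:(lia)).
  rewrite leg_count_S in *. lia.
Qed.

Lemma mono_from_shadow q m :
  (forall c, (leg_count q m c <= 1)%nat) ->
  (forall j, fst (q j) <> fst (q (S j))) ->
  ((1 <= m)%nat -> fst (q 0%nat) < fst (q 1%nat)) -> incr q m.
Proof.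
  intros Hsh Hnv H0 j. induction j; intros Hj; [apply H0; lia|].
  specialize (IHj ltac:(lia)). pose proof (Hnv (S j)).
  destruct (Rlt_dec (fst (q (S j))) (fst (q (S (S j))))) as [|Hn]; auto.
  exfalso.
  set (x0 := fst (q j)) in *. set (x1 := fst (q (S j))) in *. set (x2 := fst (q (S (S j)))) in *.
  assert (x2 < x1) by lra.
  set (c := x1 - Rmin (x1 - x0) (x1 - x2) / 2).
  assert (Hm1 : Rmin (x1 - x0) (x1 - x2) <= x1 - x0) by apply Rmin_l.
  assert (Hm2 : Rmin (x1 - x0) (x1 - x2) <= x1 - x2) by apply Rmin_r.
  assert (Hm3 : 0 < Rmin (x1 - x0) (x1 - x2)) by (apply Rmin_glb_lt; lra).
  assert (E1 : ind q j c = 1%nat) by (apply ind_one; left; unfold c; fold x0 x1; lra).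
  assert (E2 : ind q (S j) c = 1%nat) by (apply ind_one; right; unfold c; fold x1 x2; lra).
  pose proof (leg_count_two q m c j (S j) ltac:(lia) Hj E1 E2). specialize (Hsh c). lia.
Qed.

Lemma chain_lt q m : incr q m -> forall j j', (j < j')%nat -> (j' <= m)%nat -> fst (q j) < fst (q j').
Proof.
  intros H j j' Hj. induction Hj; intros Hm.
  - apply H; lia.
  - specialize (IHHj ltac:(lia)). pose proof (H m0 ltac:(lia)). lra.
Qed.

Lemma chain_le q m : incr q m -> forall j j', (j <= j')%nat -> (j' <= m)%nat -> fst (q j) <= fst (q j').
Proof.
  intros H j j' Hj Hm. destruct (Nat.eq_dec j j'). subst; lra.
  left. apply (chain_lt q m H); lia.
Qed.

Definition slope (u w : point) := (snd w - snd u) / (fst w - fst u).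
Definition linY (u w : point) (x : R) := snd u + (x - fst u) * slope u w.

Lemma linY_shift u w x h : linY u w (x + h) = linY u w x + h * slope u w.
Proof. unfold linY. ring. Qed.

Lemma linY_end u w : fst u <> fst w -> linY u w (fst w) = snd w.
Proof. intros H. unfold linY, slope. field. lra. Qed.

Lemma linY_start u w : linY u w (fst u) = snd u.
Proof. unfold linY. ring. Qed.

Lemma on_leg_lin u w x : fst u < fst w -> fst u <= x <= fst w -> on_leg u w (x, linY u w x).
Proof.
  intros H Hx. exists ((x - fst u) / (fst w - fst u)). split.
  - split. unfold Rdiv; apply Rmult_le_pos; [lra | left; apply Rinv_0_lt_compat; lra].
    apply (Rmult_le_reg_r (fst w - fst u)); [lra|]. unfold Rdiv. rewrite Rmult_assoc, Rinv_l by lra. lra.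
  - unfold linY, slope. f_equal; field; lra.
Qed.

Lemma lin_on_leg u w z : fst u < fst w -> on_leg u w z -> fst u <= fst z <= fst w /\ snd z = linY u w (fst z).
Proof.
  intros H [t [Ht Ez]]. subst z. simpl. split. nra.
  unfold linY, slope. field. lra.
Qed.

Lemma point_eq (z z' : point) : fst z = fst z' -> snd z = snd z' -> z = z'.
Proof. destruct z, z'; simpl; intros; subst; reflexivity. Qed.

Section Path.
Variable q : nat -> point.
Variable m : nat.
Hypothesis Hq : incr q m.

Lemma on_path_range z : on_path q m z -> fst (q 0%nat) <= fst z <= fst (q m).
Proof.
  intros [i [Hi Hz]]. apply lin_on_leg in Hz; [|apply Hq; auto].
  pose proof (chain_le q m Hq 0 i ltac:(lia) ltac:(lia)).
  pose proof (chain_le q m Hq (S i) m ltac:(lia) ltac:(lia)). lra.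
Qed.

Lemma path_at_leg i s : (i < m)%nat -> fst (q i) <= s <= fst (q (S i)) ->
  on_path q m (s, linY (q i) (q (S i)) s).
Proof. intros Hi Hs. exists i. split; auto. apply on_leg_lin; auto. Qed.

Lemma path_unique z z' : on_path q m z -> on_path q m z' -> fst z = fst z' -> z = z'.
Proof.
  assert (Main : forall z z' i i', (i <= i')%nat -> (i' < m)%nat -> on_leg (q i) (q (S i)) z ->
     on_leg (q i') (q (S i')) z' -> fst z = fst z' -> z = z').
  { intros z1 z2 i i' Hii Hi' H1 H2 E.
    apply lin_on_leg in H1; [|apply Hq; lia]. apply lin_on_leg in H2; [|apply Hq; lia].
    apply point_eq; auto. destruct H1 as [R1 Y1], H2 as [R2 Y2].
    destruct (Nat.eq_dec i i'). { subst. rewrite Y1, Y2, E. reflexivity. }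
    pose proof (chain_le q m Hq (S i) i' ltac:(lia) ltac:(lia)).
    destruct (Nat.eq_dec i' (S i)).
    - subst i'. assert (fst z1 = fst (q (S i))) by lra.
      rewrite Y1, Y2, <- E, H0. rewrite linY_end by (pose proof (Hq i ltac:(lia)); lra).
      rewrite linY_start. reflexivity.
    - pose proof (chain_lt q m Hq (S i) i' ltac:(lia) ltac:(lia)). lra. }
  intros [i [Hi Hz]] [i' [Hi' Hz']] E.
  destruct (le_lt_dec i i').
  - eapply Main; eauto.
  - symmetry. eapply Main with (i := i') (i' := i); eauto. lia.
Qed.

End Path.

Lemma leg_left q m s : incr q m -> fst (q 0%nat) < s <= fst (q m) -> exists i, (i < m)%nat /\ fst (q i) < s <= fst (q (S i)).
Proof.
  revert s. induction m as [|m' IH]; intros s Hq' Hs. { lra. }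
  destruct (Rle_dec s (fst (q m'))).
  - destruct (IH s) as [i [Hi Hs']]. intros j Hj; apply Hq'; lia. lra. exists i; split; auto.
  - exists m'. split; auto. lra.
Qed.

Lemma leg_right q m s : incr q m -> fst (q 0%nat) <= s < fst (q m) -> exists i, (i < m)%nat /\ fst (q i) <= s < fst (q (S i)).
Proof.
  revert s. induction m as [|m' IH]; intros s Hq' Hs. { lra. }
  destruct (Rlt_dec s (fst (q m'))).
  - destruct (IH s) as [i [Hi Hs']]. intros j Hj; apply Hq'; lia. lra. exists i; split; auto.
  - exists m'. split; auto. lra.
Qed.

Lemma on_leg_start u w : on_leg u w u.
Proof. exists 0. split; [lra|]. apply point_eq; simpl; ring. Qed.

Lemma on_leg_end u w : on_leg u w w.
Proof. exists 1. split; [lra|]. apply point_eq; simpl; ring. Qed.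

Lemma vertex_on_path q m j : (1 <= m)%nat -> (j <= m)%nat -> on_path q m (q j).
Proof.
  intros H1 H2. destruct (Nat.eq_dec j m).
  - subst. exists (m - 1)%nat. split; [lia|]. replace (S (m - 1)) with m by lia. apply on_leg_end.
  - exists j. split; [lia|]. apply on_leg_start.
Qed.

Lemma path_pt_leg q m w i : incr q m -> on_path q m w -> (i < m)%nat ->
  fst (q i) <= fst w <= fst (q (S i)) -> w = (fst w, linY (q i) (q (S i)) (fst w)).
Proof.
  intros Hq Hw Hi Hr. apply (path_unique q m Hq); auto.
  apply path_at_leg; auto.
Qed.

Lemma exists_point q m s : incr q m -> fst (q 0%nat) <= s <= fst (q m) -> fst (q 0%nat) < fst (q m) ->
  exists z, on_path q m z /\ fst z = s.
Proof.
  intros Hq Hs H0. destruct (Rlt_dec s (fst (q m))).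
  - destruct (leg_right q m s Hq ltac:(lra)) as [i [Hi Hr]].
    exists (s, linY (q i) (q (S i)) s). split; auto. apply path_at_leg; auto. lra.
  - destruct (leg_left q m s Hq ltac:(lra)) as [i [Hi Hr]].
    exists (s, linY (q i) (q (S i)) s). split; auto. apply path_at_leg; auto. lra.
Qed.

Lemma lim1 A B d : 0 < d -> (forall h, 0 < h <= d -> A >= h * B) -> A >= 0.
Proof.
  intros Hd H. destruct (Rge_dec A 0) as [|Hn]; auto. exfalso.
  set (h := Rmin d (- A / (2 * (Rabs B + 1)))).
  assert (Hab : 0 <= Rabs B) by apply Rabs_pos.
  assert (Hp : 0 < - A / (2 * (Rabs B + 1))) by (unfold Rdiv; apply Rmult_lt_0_compat; [lra|apply Rinv_0_lt_compat; lra]).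
  assert (Hh1 : h <= d) by apply Rmin_l.
  assert (Hh2 : h <= - A / (2 * (Rabs B + 1))) by apply Rmin_r.
  assert (Hh0 : 0 < h) by (apply Rmin_glb_lt; lra).
  specialize (H h (conj Hh0 Hh1)).
  assert (h * (2 * (Rabs B + 1)) <= - A).
  { apply (Rmult_le_compat_r (2 * (Rabs B + 1))) in Hh2; [|lra].
    unfold Rdiv in Hh2. rewrite Rmult_assoc, Rinv_l in Hh2 by lra. lra. }
  assert (- Rabs B <= B) by (pose proof (Rle_abs (-B)); rewrite Rabs_Ropp in *; lra).
  nra.
Qed.

Lemma lim2 A B d : 0 < d -> (forall e, 0 < e <= d -> exists h, 0 <= h < e /\ A + h * B < 0) -> A <= 0.
Proof.
  intros Hd H. destruct (Rle_dec A 0) as [|Hn]; auto. exfalso.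
  set (e := Rmin d (A / (Rabs B + 1))).
  assert (Hab : 0 <= Rabs B) by apply Rabs_pos.
  assert (Hp : 0 < A / (Rabs B + 1)) by (unfold Rdiv; apply Rmult_lt_0_compat; [lra|apply Rinv_0_lt_compat; lra]).
  assert (He1 : e <= d) by apply Rmin_l.
  assert (He2 : e <= A / (Rabs B + 1)) by apply Rmin_r.
  assert (He0 : 0 < e) by (apply Rmin_glb_lt; lra).
  destruct (H e (conj He0 He1)) as [h [Hh Hlt]].
  assert (e * (Rabs B + 1) <= A).
  { apply (Rmult_le_compat_r (Rabs B + 1)) in He2; [|lra].
    unfold Rdiv in He2. rewrite Rmult_assoc, Rinv_l in He2 by lra. lra. }
  assert (- Rabs B <= B) by (pose proof (Rle_abs (-B)); rewrite Rabs_Ropp in *; lra).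
  nra.
Qed.

Lemma sqrt_facts x : 0 <= x -> 0 <= sqrt x /\ sqrt x * sqrt x = x.
Proof. intros H. split. apply sqrt_pos. apply sqrt_sqrt; auto. Qed.

Lemma sqr_nonneg x : 0 <= x*x.
Proof. pose proof (Rle_0_sqr x); unfold Rsqr in *; lra. Qed.

Lemma sq2 x y : 0 <= x*x + y*y.
Proof. pose proof (Rle_0_sqr x); pose proof (Rle_0_sqr y); unfold Rsqr in *; lra. Qed.

Lemma dist_core (a v e : point) :
  let u1 := fst v - fst a in let u2 := snd v - snd a in
  let w1 := fst e - fst v in let w2 := snd e - snd v in
  dist a v = sqrt (u1*u1 + u2*u2) /\ dist v e = sqrt (w1*w1 + w2*w2) /\
  dist a e = sqrt ((u1+w1)*(u1+w1) + (u2+w2)*(u2+w2)).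
Proof.
  intros. unfold dist. repeat split; f_equal; unfold u1, u2, w1, w2; simpl; ring.
Qed.

Lemma dist_tri a v e : dist a e <= dist a v + dist v e.
Proof.
  destruct (dist_core a v e) as [E1 [E2 E3]]. rewrite E1, E2, E3.
  set (u1 := fst v - fst a). set (u2 := snd v - snd a).
  set (w1 := fst e - fst v). set (w2 := snd e - snd v).
  destruct (sqrt_facts (u1*u1+u2*u2) (sq2 _ _)) as [A0 A1].
  destruct (sqrt_facts (w1*w1+w2*w2) (sq2 _ _)) as [B0 B1].
  destruct (sqrt_facts ((u1+w1)*(u1+w1)+(u2+w2)*(u2+w2)) (sq2 _ _)) as [C0 C1].
  set (A := sqrt (u1*u1+u2*u2)) in *. set (B := sqrt (w1*w1+w2*w2)) in *.
  set (C := sqrt ((u1+w1)*(u1+w1)+(u2+w2)*(u2+w2))) in *.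
  assert (CS : (u1*w1+u2*w2)*(u1*w1+u2*w2) <= (A*B)*(A*B)).
  { replace ((A*B)*(A*B)) with ((A*A)*(B*B)) by ring. rewrite A1, B1.
    pose proof (sqr_nonneg (u1*w2-u2*w1)). nra. }
  assert (AB : u1*w1+u2*w2 <= A*B).
  { assert (0 <= A*B) by nra. nra. }
  assert (C*C <= (A+B)*(A+B)) by nra. nra.
Qed.

Lemma dist_collinear a v e : dist a v + dist v e <= dist a e ->
  (fst v - fst a) * (snd e - snd v) = (snd v - snd a) * (fst e - fst v).
Proof.
  destruct (dist_core a v e) as [E1 [E2 E3]]. rewrite E1, E2, E3.
  set (u1 := fst v - fst a). set (u2 := snd v - snd a).
  set (w1 := fst e - fst v). set (w2 := snd e - snd v).
  destruct (sqrt_facts (u1*u1+u2*u2) (sq2 _ _)) as [A0 A1].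
  destruct (sqrt_facts (w1*w1+w2*w2) (sq2 _ _)) as [B0 B1].
  destruct (sqrt_facts ((u1+w1)*(u1+w1)+(u2+w2)*(u2+w2)) (sq2 _ _)) as [C0 C1].
  set (A := sqrt (u1*u1+u2*u2)) in *. set (B := sqrt (w1*w1+w2*w2)) in *.
  set (C := sqrt ((u1+w1)*(u1+w1)+(u2+w2)*(u2+w2))) in *.
  intros H.
  assert (H2 : (A+B)*(A+B) <= C*C) by nra.
  assert (H3 : A*B <= u1*w1+u2*w2) by nra.
  assert (0 <= A*B) by nra.
  assert (H4 : (A*B)*(A*B) <= (u1*w1+u2*w2)*(u1*w1+u2*w2)) by nra.
  replace ((A*B)*(A*B)) with ((A*A)*(B*B)) in H4 by ring. rewrite A1, B1 in H4.
  assert (H5 : (u1*w2-u2*w1)*(u1*w2-u2*w1) <= 0) by nra.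
  nra.
Qed.

Lemma dist_scale (a b : point) t : 0 <= t ->
  dist a (fst a + t * (fst b - fst a), snd a + t * (snd b - snd a)) = t * dist a b.
Proof.
  intros Ht. unfold dist. simpl.
  transitivity (sqrt (Rsqr t * ((fst a - fst b)^2 + (snd a - snd b)^2))).
  - f_equal. unfold Rsqr. ring.
  - rewrite sqrt_mult; [| apply Rle_0_sqr | pose proof (pow2_ge_0 (fst a - fst b)); pose proof (pow2_ge_0 (snd a - snd b)); lra].
    rewrite sqrt_Rsqr; auto.
Qed.

Lemma dist_split a b v : on_leg a b v -> dist a b = dist a v + dist v b.
Proof.
  intros [t [Ht Ev]]. subst v. rewrite dist_scale by lra.
  rewrite (dist_sym (fst a + t * (fst b - fst a), snd a + t * (snd b - snd a)) b).
  replace (fst a + t * (fst b - fst a), snd a + t * (snd b - snd a)) with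
    (fst b + (1 - t) * (fst a - fst b), snd b + (1 - t) * (snd a - snd b)) by (f_equal; ring).
  rewrite dist_scale by lra. rewrite (dist_sym b a). ring.
Qed.

Lemma cost_split (A0 V1 B V2 D' X1 X2 B' B0 : list point) a b e d :
  B = b :: B' -> B = B0 ++ [e] ->
  pc (A0 ++ a :: V1 ++ B ++ V2 ++ d :: D') =
    pc (A0 ++ [a]) + pc (a :: V1 ++ [b]) + pc B + pc (e :: V2 ++ [d]) + pc (d :: D') /\
  pc (A0 ++ a :: X1 ++ rev B ++ X2 ++ d :: D') =
    pc (A0 ++ [a]) + pc (a :: X1 ++ [e]) + pc B + pc (b :: X2 ++ [d]) + pc (d :: D').
Proof.
  intros HB1 HB2. split.
  - rewrite (pc_app2 A0 a (V1 ++ B ++ V2 ++ d :: D')).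
    replace (a :: V1 ++ B ++ V2 ++ d :: D') with ((a :: V1) ++ b :: (B' ++ V2 ++ d :: D'))
      by (rewrite HB1; reflexivity).
    rewrite (pc_app2 (a :: V1) b).
    replace (b :: B' ++ V2 ++ d :: D') with (B0 ++ e :: (V2 ++ d :: D')).
    2:{ change (b :: B' ++ V2 ++ d :: D') with ((b :: B') ++ V2 ++ d :: D').
        rewrite <- HB1, HB2, <- app_assoc. reflexivity. }
    rewrite (pc_app2 B0 e). rewrite <- HB2.
    change (pc (e :: V2 ++ d :: D')) with (pc ((e :: V2) ++ d :: D')).
    rewrite (pc_app2 (e :: V2) d D'). simpl app. lra.
  - rewrite (pc_app2 A0 a (X1 ++ rev B ++ X2 ++ d :: D')).
    assert (R1 : rev B = e :: rev B0) by (rewrite HB2; apply rev_unit).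
    assert (R2 : rev B = rev B' ++ [b]) by (rewrite HB1; reflexivity).
    replace (a :: X1 ++ rev B ++ X2 ++ d :: D') with ((a :: X1) ++ e :: (rev B0 ++ X2 ++ d :: D'))
      by (rewrite R1; reflexivity).
    rewrite (pc_app2 (a :: X1) e).
    replace (e :: rev B0 ++ X2 ++ d :: D') with (rev B' ++ b :: (X2 ++ d :: D')).
    2:{ change (e :: rev B0 ++ X2 ++ d :: D') with ((e :: rev B0) ++ X2 ++ d :: D').
        rewrite <- R1, R2, <- app_assoc. reflexivity. }
    rewrite (pc_app2 (rev B') b). rewrite <- R2, pc_rev.
    change (pc (b :: X2 ++ d :: D')) with (pc ((b :: X2) ++ d :: D')).
    rewrite (pc_app2 (b :: X2) d D'). simpl app. lra.
Qed.

Lemma list_tour n sx sy (x0 : point) M' :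
  let L := x0 :: M' ++ [x0] in
  (forall y, In y L -> exists s, (s < n)%nat /\ on_seg sx sy s y) ->
  (forall s, (s < n)%nat -> exists y, In y L /\ on_seg sx sy s y) ->
  is_tour n sx sy (S (length M')) (fun i => nth i L x0) /\
  cost (S (length M')) (fun i => nth i L x0) = pc L.
Proof.
  intros L Hon Hcov.
  assert (HlenL : length L = S (S (length M'))) by (unfold L; simpl; rewrite length_app; simpl; lia).
  assert (Hlast : nth (S (length M')) L x0 = x0).
  { unfold L. simpl. apply nth_middle. }
  split; [split; [lia| split]|].
  - intros i Hi. apply Hon. apply nth_In. lia.
  - intros s Hs. destruct (Hcov s Hs) as [y [Hy Hys]].
    destruct (In_nth L y x0 Hy) as [j [Hj Ej]].
    destruct (Nat.eq_dec j (S (length M'))).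
    + exists 0%nat. split; [lia|]. subst j. rewrite Hlast in Ej. subst y. exact Hys.
    + exists j. split; [lia|]. now rewrite Ej.
  - rewrite (pc_nth L x0). rewrite HlenL. replace (S (S (length M')) - 1)%nat with (S (length M')) by lia.
    unfold cost. apply rsum_ext. intros i Hi. f_equal.
    destruct (Nat.eq_dec (S i) (S (length M'))).
    + unfold pt. replace (Z.of_nat i + 1)%Z with (Z.of_nat (S (length M'))) by lia.
      rewrite Z.mod_same by lia. simpl Z.to_nat. rewrite e, Hlast. reflexivity.
    + replace (Z.of_nat i + 1)%Z with (Z.of_nat (S i)) by lia.
      rewrite pt_nat by lia. reflexivity.
Qed.

Lemma seq_split2 a n x b c : (x <= n)%nat -> b = (a + x)%nat -> c = (n - x)%nat ->
  seq a n = seq a x ++ seq b c.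
Proof.
  intros H1 H2 H3. subst. rewrite <- seq_app. f_equal. lia.
Qed.

Lemma surgery n sx sy sigma p (W : nat -> point) (v : point) i i' jd je :
  is_OPT n sx sy sigma p ->
  (forall j, exists i0, (i0 < sigma)%nat /\ W j = p i0) ->
  (forall i0, (i0 < sigma)%nat -> exists j, (j < sigma)%nat /\ W j = p i0) ->
  W sigma = W 0%nat ->
  cost sigma p = rsum (fun j => dist (W j) (W (S j))) sigma ->
  (i <= i' <= S i)%nat -> (jd <= je <= S jd)%nat -> (i' + je + 2 <= sigma)%nat ->
  (i' = S i -> W (S i) = v) -> (je = S jd -> W (sigma - S jd)%nat = v) ->
  (i' = i -> dist (W i) (W (S i)) = dist (W i) v + dist v (W (S i))) ->
  (je = jd -> dist (W (sigma - S jd)%nat) (W (sigma - jd)%nat) =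
              dist (W (sigma - S jd)%nat) v + dist v (W (sigma - jd)%nat)) ->
  (dist (W i) v + dist v (W (sigma - S je)%nat) > dist (W i) (W (sigma - S je)%nat) \/
   dist (W (S i')) v + dist v (W (sigma - jd)%nat) > dist (W (S i')) (W (sigma - jd)%nat)) ->
  False.
Proof.
  intros Hopt Hpts Hsurj Hper Hcost Hi Hj Hij Hv1 Hv2 Hd1 Hd2 Hgain.
  destruct Hopt as [Htour [Hmin _]].
  set (nB := (sigma - S je - i')%nat).
  set (A0 := map W (seq 0 i)). set (a := W i).
  set (V1 := map W (seq (S i) (i' - i))).
  set (B := map W (seq (S i') nB)). set (b := W (S i')). set (e := W (sigma - S je)%nat).
  set (B' := map W (seq (S (S i')) (nB - 1))). set (B0 := map W (seq (S i') (nB - 1))).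
  set (V2 := map W (seq (sigma - je) (je - jd))).
  set (d := W (sigma - jd)%nat). set (D' := map W (seq (S (sigma - jd)) jd)).
  assert (HB1 : B = b :: B').
  { assert (HnB : nB = S (nB - 1)) by (unfold nB; lia). unfold B, b, B'. rewrite HnB at 1. reflexivity. }
  assert (HB2 : B = B0 ++ [e]).
  { assert (HnB : nB = S (nB - 1)) by (unfold nB; lia). unfold B, B0, e. rewrite HnB at 1. rewrite seq_S, map_app.
    simpl. do 3 f_equal. unfold nB. lia. }
  assert (Hseq : seq 0 (S sigma) = seq 0 i ++ [i] ++ seq (S i) (i' - i) ++ seq (S i') nB ++
                   seq (sigma - je) (je - jd) ++ [(sigma - jd)%nat] ++ seq (S (sigma - jd)) jd).
  { rewrite (seq_split2 0 (S sigma) i i (S sigma - i)) by lia. f_equal.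
    rewrite (seq_split2 i (S sigma - i) 1 (S i) (sigma - i)) by lia. f_equal.
    rewrite (seq_split2 (S i) (sigma - i) (i' - i) (S i') (sigma - i')) by lia. f_equal.
    rewrite (seq_split2 (S i') (sigma - i') nB (sigma - je) (S je)) by (unfold nB; lia). f_equal.
    rewrite (seq_split2 (sigma - je) (S je) (je - jd) (sigma - jd) (S jd)) by lia. f_equal.
    all: try reflexivity. }
  assert (HWl : map W (seq 0 (S sigma)) = A0 ++ a :: V1 ++ B ++ V2 ++ d :: D').
  { rewrite Hseq. rewrite !map_app. reflexivity. }
  assert (Hold : cost sigma p = pc (A0 ++ a :: V1 ++ B ++ V2 ++ d :: D')).
  { rewrite <- HWl, pc_map_seq, Hcost. apply rsum_ext. intros; reflexivity. }
  assert (Hc1 : pc (a :: V1 ++ [b]) = dist a v + dist v b).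
  { destruct (Nat.eq_dec i' i).
    - unfold V1. rewrite e0, Nat.sub_diag. simpl. unfold a, b. rewrite e0, Hd1 by auto. lra.
    - assert (i' = S i) by lia. unfold V1. replace (i' - i)%nat with 1%nat by lia. simpl.
      rewrite Hv1 by auto. unfold b. lra. }
  assert (Hc2 : pc (e :: V2 ++ [d]) = dist v e + dist v d).
  { destruct (Nat.eq_dec je jd).
    - unfold V2. rewrite e0, Nat.sub_diag. simpl. unfold e, d. rewrite e0, Hd2 by auto.
      rewrite (dist_sym _ v). lra.
    - assert (je = S jd) by lia. unfold V2. replace (je - jd)%nat with 1%nat by lia. simpl.
      replace (sigma - je)%nat with (sigma - S jd)%nat by lia.
      rewrite Hv2 by auto. rewrite (dist_sym e v). lra. }
  assert (T1 := dist_tri a v e). assert (T2 := dist_tri b v d).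
  assert (Finish : forall X1 X2,
     (forall y, In y X1 \/ In y X2 -> exists s, (s < n)%nat /\ on_seg sx sy s y) ->
     (forall y, In y V1 \/ In y V2 -> In y X1 \/ In y X2) ->
     pc (a :: X1 ++ [e]) + pc (b :: X2 ++ [d]) < pc (a :: V1 ++ [b]) + pc (e :: V2 ++ [d]) -> False).
  { intros X1 X2 HX HV Hlt.
    destruct (cost_split A0 V1 B V2 D' X1 X2 B' B0 a b e d HB1 HB2) as [E1 E2].
    set (Lnew := A0 ++ a :: X1 ++ rev B ++ X2 ++ d :: D').
    set (M' := map W (seq 1 i) ++ X1 ++ rev B ++ X2 ++ map W (seq (sigma - jd) jd)).
    assert (HL : Lnew = W 0%nat :: M' ++ [W 0%nat]).
    { unfold Lnew, M'.
      assert (EA : A0 ++ [a] = W 0%nat :: map W (seq 1 i)).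
      { unfold A0, a. change [W i] with (map W [i]). rewrite <- map_app.
        replace (seq 0 i ++ [i]) with (seq 0 (S i)) by (rewrite seq_S; reflexivity). reflexivity. }
      assert (ED : d :: D' = map W (seq (sigma - jd) jd) ++ [W 0%nat]).
      { unfold d, D'. rewrite <- Hper. change [W sigma] with (map W [sigma]). rewrite <- map_app.
        replace (seq (sigma - jd) jd ++ [sigma]) with (seq (sigma - jd) (S jd)).
        2:{ rewrite seq_S. do 3 f_equal. lia. }
        reflexivity. }
      replace (A0 ++ a :: X1 ++ rev B ++ X2 ++ d :: D') with
        ((A0 ++ [a]) ++ X1 ++ rev B ++ X2 ++ d :: D') by (rewrite <- app_assoc; reflexivity).
      rewrite EA, ED. simpl. rewrite <- !app_assoc. reflexivity. }
    assert (Hin : forall y, In y Lnew -> (exists j, y = W j) \/ In y X1 \/ In y X2).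
    { intros y Hy. unfold Lnew in Hy. rewrite !in_app_iff in Hy. simpl in Hy.
      rewrite !in_app_iff in Hy. rewrite <- in_rev in Hy.
      unfold A0, B in Hy. rewrite !in_map_iff in Hy.
      destruct Hy as [[x [Ex _]]|[Ey|[Hy|[[x [Ex _]]|[Hy|Hy]]]]]; eauto.
      simpl in Hy. destruct Hy as [Ey|Hy]; eauto.
      unfold D' in Hy. apply in_map_iff in Hy. destruct Hy as [x [Ex _]]. eauto. }
    assert (Hon : forall y, In y Lnew -> exists s, (s < n)%nat /\ on_seg sx sy s y).
    { intros y Hy. destruct (Hin y Hy) as [[j Ej]|HyX]; [|apply HX; auto].
      destruct (Hpts j) as [i0 [Hi0 Ei0]]. subst y. rewrite Ei0.
      destruct Htour as [_ [Hp _]]. apply Hp; auto. }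
    assert (Hcov : forall s, (s < n)%nat -> exists y, In y Lnew /\ on_seg sx sy s y).
    { intros s Hs. destruct Htour as [_ [_ Hc]]. destruct (Hc s Hs) as [i0 [Hi0 Hon0]].
      destruct (Hsurj i0 Hi0) as [j [Hj0 Ej]]. exists (W j). split; [|rewrite Ej; auto].
      assert (Hw : In (W j) (A0 ++ a :: V1 ++ B ++ V2 ++ d :: D')).
      { rewrite <- HWl. apply in_map. apply in_seq. lia. }
      unfold Lnew. rewrite !in_app_iff in Hw |- *. simpl in Hw |- *.
      rewrite !in_app_iff in Hw |- *. rewrite <- in_rev.
      pose proof (HV (W j)). tauto. }
    rewrite HL in Hon, Hcov.
    destruct (list_tour n sx sy (W 0%nat) M' Hon Hcov) as [Ht' Hc'].
    specialize (Hmin _ _ Ht'). rewrite Hc', <- HL in Hmin. unfold Lnew in Hmin.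
    rewrite E2, Hold, E1 in Hmin. lra. }
  destruct (classic (exists s, (s < n)%nat /\ on_seg sx sy s v)) as [Hvs|Hvs].
  - destruct (Rlt_dec 0 (dist b v + dist v d - dist b d)).
    + apply (Finish [v] []).
      * intros y [[<-|[]]|[]]; auto.
      * intros y Hy. left. left. destruct Hy as [Hy|Hy].
        -- destruct (Nat.eq_dec i' i). unfold V1 in Hy; rewrite e0, Nat.sub_diag in Hy; destruct Hy.
           unfold V1 in Hy; replace (i' - i)%nat with 1%nat in Hy by lia. destruct Hy as [<-|[]].
           symmetry; apply Hv1; lia.
        -- destruct (Nat.eq_dec je jd). unfold V2 in Hy; rewrite e0, Nat.sub_diag in Hy; destruct Hy.
           unfold V2 in Hy; replace (je - jd)%nat with 1%nat in Hy by lia. destruct Hy as [<-|[]].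
           replace (sigma - je)%nat with (sigma - S jd)%nat by lia. symmetry; apply Hv2; lia.
      * rewrite Hc1, Hc2. simpl. rewrite (dist_sym v b). lra.
    + apply (Finish [] [v]).
      * intros y [[]|[<-|[]]]; auto.
      * intros y Hy. right. left. destruct Hy as [Hy|Hy].
        -- destruct (Nat.eq_dec i' i). unfold V1 in Hy; rewrite e0, Nat.sub_diag in Hy; destruct Hy.
           unfold V1 in Hy; replace (i' - i)%nat with 1%nat in Hy by lia. destruct Hy as [<-|[]].
           symmetry; apply Hv1; lia.
        -- destruct (Nat.eq_dec je jd). unfold V2 in Hy; rewrite e0, Nat.sub_diag in Hy; destruct Hy.
           unfold V2 in Hy; replace (je - jd)%nat with 1%nat in Hy by lia. destruct Hy as [<-|[]].
           replace (sigma - je)%nat with (sigma - S jd)%nat by lia. symmetry; apply Hv2; lia.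
      * rewrite Hc1, Hc2. simpl. rewrite (dist_sym v b).
        fold a e b d in Hgain. lra.
  - apply (Finish [] []).
    + intros y [[]|[]].
    + intros y Hy. exfalso. apply Hvs.
      assert (Hyv : y = v).
      { destruct Hy as [Hy|Hy].
        -- destruct (Nat.eq_dec i' i). unfold V1 in Hy; rewrite e0, Nat.sub_diag in Hy; destruct Hy.
           unfold V1 in Hy; replace (i' - i)%nat with 1%nat in Hy by lia. destruct Hy as [<-|[]].
           apply Hv1; lia.
        -- destruct (Nat.eq_dec je jd). unfold V2 in Hy; rewrite e0, Nat.sub_diag in Hy; destruct Hy.
           unfold V2 in Hy; replace (je - jd)%nat with 1%nat in Hy by lia. destruct Hy as [<-|[]].
           replace (sigma - je)%nat with (sigma - S jd)%nat by lia. apply Hv2; lia. }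
      assert (Hyw : exists j, y = W j).
      { destruct Hy as [Hy|Hy]; unfold V1, V2 in Hy; apply in_map_iff in Hy; destruct Hy as [x [Ex _]]; eauto. }
      destruct Hyw as [j Ej]. destruct (Hpts j) as [i0 [Hi0 Ei0]].
      destruct Htour as [_ [Hp _]]. rewrite <- Hyv, Ej, Ei0. apply Hp; auto.
    + rewrite Hc1, Hc2. simpl. rewrite (dist_sym v b). fold a e b d in Hgain. lra.
Qed.

Lemma first_leg n sx sy sigma p k b :
  (k < sigma)%nat ->
  (forall i, (i < sigma)%nat -> fst (p i) <> fst (pt sigma p (Z.of_nat i + 1))) ->
  right_reflection n sx sy sigma p k ->
  fst (p k) < fst (subpath sigma p (Z.of_nat k) b 1).
Proof.
  intros Hk Hnv [s0 [Hs0 [[Hx _] Hl]]].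
  assert (Hs : (0 < sigma)%nat) by lia.
  pose proof (nonvert_sub sigma p (Z.of_nat k) b Hs Hnv 0) as N.
  rewrite sub_0, pt_nat in N by auto.
  assert (fst (p k) <= fst (subpath sigma p (Z.of_nat k) b 1)).
  { destruct b.
    - rewrite sub_true. specialize (Hl (pt sigma p (Z.of_nat k + Z.of_nat 1)%Z)).
      assert (fst (pt sigma p (Z.of_nat k + Z.of_nat 1)%Z) >= sx s0); [|lra].
      apply Hl. left. replace (Z.of_nat k + Z.of_nat 1)%Z with (Z.of_nat k + 1)%Z by lia. apply on_leg_end.
    - rewrite sub_false. specialize (Hl (pt sigma p (Z.of_nat k - Z.of_nat 1)%Z)).
      assert (fst (pt sigma p (Z.of_nat k - Z.of_nat 1)%Z) >= sx s0); [|lra].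
      apply Hl. right. replace (Z.of_nat k - Z.of_nat 1)%Z with (Z.of_nat k - 1)%Z by lia. apply on_leg_end. }
  lra.
Qed.

Lemma eq_cancel P x y : 0 < P -> P * x = P * y -> x = y.
Proof. intros HP H. apply (Rmult_eq_reg_l P); lra. Qed.

Theorem lemma5 (n : nat) (sx sy : nat -> R) (sigma : nat) (p : nat -> point)
    (k : nat) (fwd : bool) (m1 m2 : nat) (c : R) :
  distinct_x n sx ->
  is_OPT n sx sy sigma p ->
  (k < sigma)%nat ->
  right_reflection n sx sy sigma p k ->
  (1 <= m1 <= sigma)%nat -> (1 <= m2 <= sigma)%nat ->
  leg_above (p k) (subpath sigma p (Z.of_nat k) fwd 1)
                  (subpath sigma p (Z.of_nat k) (negb fwd) 1) ->
  shadow_one (subpath sigma p (Z.of_nat k) fwd) m1 ->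
  shadow_one (subpath sigma p (Z.of_nat k) (negb fwd)) m2 ->
  fst (p k) < c ->
  crosses_line (subpath sigma p (Z.of_nat k) fwd) m1 c ->
  crosses_line (subpath sigma p (Z.of_nat k) (negb fwd)) m2 c ->
  path_above (subpath sigma p (Z.of_nat k) fwd) m1
             (subpath sigma p (Z.of_nat k) (negb fwd)) m2 (fst (p k)) c.
Proof.
  intros _ Hopt Hk Hrr Hm1 Hm2 Habove Hsh1 Hsh2 Hc Hcr1 Hcr2.
  pose proof Hopt as Hopt'.
  destruct Hopt' as [Htour [Hmin [_ [Hnv _]]]].
  assert (Hs : (0 < sigma)%nat) by lia.
  set (q1 := subpath sigma p (Z.of_nat k) fwd) in *.
  set (q2 := subpath sigma p (Z.of_nat k) (negb fwd)) in *.
  assert (H01 : q1 0%nat = p k) by (unfold q1; rewrite sub_0, pt_nat; auto).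
  assert (H02 : q2 0%nat = p k) by (unfold q2; rewrite sub_0, pt_nat; auto).
  assert (F1 : fst (p k) < fst (q1 1%nat)) by (apply (first_leg n sx sy); auto).
  assert (F2 : fst (p k) < fst (q2 1%nat)) by (apply (first_leg n sx sy); auto).
  assert (I1 : incr q1 m1).
  { apply mono_from_shadow. apply Hsh1. apply nonvert_sub; auto. intros _. rewrite H01. auto. }
  assert (I2 : incr q2 m2).
  { apply mono_from_shadow. apply Hsh2. apply nonvert_sub; auto. intros _. rewrite H02. auto. }
  assert (C1 : c <= fst (q1 m1)).
  { destruct Hcr1 as [z [Hz Ez]]. apply (on_path_range q1 m1 I1) in Hz. lra. }
  assert (C2 : c <= fst (q2 m2)).
  { destruct Hcr2 as [z [Hz Ez]]. apply (on_path_range q2 m2 I2) in Hz. lra. }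
  assert (P1k : on_path q1 m1 (p k)) by (rewrite <- H01; apply vertex_on_path; lia).
  assert (P2k : on_path q2 m2 (p k)) by (rewrite <- H02; apply vertex_on_path; lia).
  assert (Key : forall t z1 z2, fst (p k) <= t <= c -> on_path q1 m1 z1 -> on_path q2 m2 z2 ->
                fst z1 = t -> fst z2 = t -> snd z2 <= snd z1).
  { intros t z1 z2 Ht Hz1 Hz2 E1 E2.
    destruct (Rle_dec (snd z2) (snd z1)) as [|Hlt]; auto. exfalso.
    apply Rnot_le_lt in Hlt.
    clear Hcr1 Hcr2.
    assert (Htr : fst (p k) < t).
    { destruct (Req_dec t (fst (p k))) as [Et|]; [|lra].
      assert (z1 = p k) by (apply (path_unique q1 m1 I1); auto; lra).
      assert (z2 = p k) by (apply (path_unique q2 m2 I2); auto; lra).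
      subst; lra. }
    assert (N1 : forall j, (j <= sigma)%nat -> q2 j = q1 (sigma - j)%nat) by (intros; apply sub_neg; auto).
    set (Sset := fun x => fst (p k) <= x <= t /\ forall x', fst (p k) <= x' <= x ->
          forall w1 w2, on_path q1 m1 w1 -> on_path q2 m2 w2 -> fst w1 = x' -> fst w2 = x' -> snd w2 <= snd w1).
    assert (Gxr : forall w1 w2, on_path q1 m1 w1 -> on_path q2 m2 w2 -> fst w1 = fst (p k) ->
                  fst w2 = fst (p k) -> snd w2 <= snd w1).
    { intros w1 w2 Hw1 Hw2 Ew1 Ew2.
      assert (w1 = p k) by (apply (path_unique q1 m1 I1); auto).
      assert (w2 = p k) by (apply (path_unique q2 m2 I2); auto). subst; lra. }
    destruct (completeness Sset) as [s [Hub Hlub]].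
    { exists t. intros x [Hx _]. lra. }
    { exists (fst (p k)). split; [lra|]. intros x' Hx' w1 w2 Hw1 Hw2 Ew1 Ew2. apply Gxr; auto; lra. }
    set (e1 := Rmin (Rmin (fst (q1 1%nat) - fst (p k)) (fst (q2 1%nat) - fst (p k))) (t - fst (p k))).
    assert (He1 : 0 < e1) by (unfold e1; repeat apply Rmin_glb_lt; lra).
    assert (He1a : e1 <= fst (q1 1%nat) - fst (p k)) by (unfold e1; eapply Rle_trans; [apply Rmin_l|apply Rmin_l]).
    assert (He1b : e1 <= fst (q2 1%nat) - fst (p k)) by (unfold e1; eapply Rle_trans; [apply Rmin_l|apply Rmin_r]).
    assert (He1c : e1 <= t - fst (p k)) by (unfold e1; apply Rmin_r).
    clearbody e1.
    assert (Sinit : Sset (fst (p k) + e1)).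
    { split; [lra|]. intros x' Hx' w1 w2 Hw1 Hw2 Ew1 Ew2.
      destruct (Req_dec x' (fst (p k))) as [->|Hne]; [apply Gxr; auto|].
      assert (W1 := path_pt_leg q1 m1 w1 0 I1 Hw1 ltac:(lia) ltac:(rewrite H01; lra)).
      assert (W2 := path_pt_leg q2 m2 w2 0 I2 Hw2 ltac:(lia) ltac:(rewrite H02; lra)).
      assert (L1 : on_leg (p k) (q1 1%nat) w1).
      { rewrite W1, <- H01. apply on_leg_lin. rewrite H01; lra. rewrite H01; lra. }
      assert (L2 : on_leg (p k) (q2 1%nat) w2).
      { rewrite W2, <- H02. apply on_leg_lin. rewrite H02; lra. rewrite H02; lra. }
      assert (snd w1 > snd w2).
      { apply Habove; auto. intros Ew; rewrite Ew in Ew1; lra. intros Ew; rewrite Ew in Ew2; lra. }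
      lra. }
    assert (Hsge : fst (p k) + e1 <= s) by (apply Hub; auto).
    assert (Hsle : s <= t) by (apply Hlub; intros x [Hx _]; lra).
    assert (GL : forall x', fst (p k) <= x' < s -> forall w1 w2, on_path q1 m1 w1 -> on_path q2 m2 w2 ->
                 fst w1 = x' -> fst w2 = x' -> snd w2 <= snd w1).
    { intros x' Hx' w1 w2 Hw1 Hw2 Ew1 Ew2.
      destruct (classic (exists x'', Sset x'' /\ x' <= x'')) as [[x'' [[_ HS] Hle]]|Hn].
      - apply (HS x'); auto; lra.
      - exfalso. assert (s <= x'); [|lra]. apply Hlub. intros x Hx.
        destruct (Rle_dec x x'); auto. exfalso; apply Hn; exists x; split; auto; lra. }
    destruct (leg_left q1 m1 s I1) as [i [Hi Hi']]. { rewrite H01; lra. }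
    destruct (leg_left q2 m2 s I2) as [jd [Hjd Hjd']]. { rewrite H02; lra. }
    assert (Ha0 : fst (p k) <= fst (q1 i)) by (rewrite <- H01; apply (chain_le q1 m1 I1); lia).
    assert (Hd0 : fst (p k) <= fst (q2 jd)) by (rewrite <- H02; apply (chain_le q2 m2 I2); lia).
    set (dL := Rmin (s - fst (q1 i)) (s - fst (q2 jd))).
    assert (HdL : 0 < dL) by (unfold dL; apply Rmin_glb_lt; lra).
    assert (HdLa : dL <= s - fst (q1 i)) by apply Rmin_l.
    assert (HdLd : dL <= s - fst (q2 jd)) by apply Rmin_r.
    clearbody dL.
    assert (LeftF : forall h, 0 < h <= dL -> linY (q1 i) (q1 (S i)) s - linY (q2 jd) (q2 (S jd)) s >=
                      h * (slope (q1 i) (q1 (S i)) - slope (q2 jd) (q2 (S jd)))).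
    { intros h Hh.
      assert (G := GL (s + - h) ltac:(lra) (s + - h, linY (q1 i) (q1 (S i)) (s + - h))
         (s + - h, linY (q2 jd) (q2 (S jd)) (s + - h))
         (path_at_leg q1 m1 I1 i (s + - h) Hi ltac:(lra)) (path_at_leg q2 m2 I2 jd (s + - h) Hjd ltac:(lra))
         eq_refl eq_refl).
      simpl in G. rewrite !linY_shift in G. lra. }
    assert (Y12 := lim1 _ _ dL HdL LeftF).
    assert (Hst : s < t).
    { destruct (Req_dec s t) as [Est|]; [|lra]. exfalso.
      assert (z1 = (s, linY (q1 i) (q1 (S i)) s)).
      { apply (path_unique q1 m1 I1); auto. apply path_at_leg; auto; lra. simpl; lra. }
      assert (z2 = (s, linY (q2 jd) (q2 (S jd)) s)).
      { apply (path_unique q2 m2 I2); auto. apply path_at_leg; auto; lra. simpl; lra. }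
      subst z1 z2. simpl in Hlt. lra. }
    destruct (leg_right q1 m1 s I1) as [i' [Hi2 Hi2']]. { rewrite H01; lra. }
    destruct (leg_right q2 m2 s I2) as [je [Hje Hje']]. { rewrite H02; lra. }
    assert (Y1r : linY (q1 i') (q1 (S i')) s = linY (q1 i) (q1 (S i)) s).
    { assert (Hp1 := path_at_leg q1 m1 I1 i' s Hi2 ltac:(lra)).
      assert (Hp2 := path_at_leg q1 m1 I1 i s Hi ltac:(lra)).
      assert (Eq := path_unique q1 m1 I1 _ _ Hp1 Hp2 eq_refl). injection Eq; auto. }
    assert (Y2r : linY (q2 je) (q2 (S je)) s = linY (q2 jd) (q2 (S jd)) s).
    { assert (Hp1 := path_at_leg q2 m2 I2 je s Hje ltac:(lra)).
      assert (Hp2 := path_at_leg q2 m2 I2 jd s Hjd ltac:(lra)).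
      assert (Eq := path_unique q2 m2 I2 _ _ Hp1 Hp2 eq_refl). injection Eq; auto. }
    set (dR := Rmin (Rmin (fst (q1 (S i')) - s) (fst (q2 (S je)) - s)) (t - s)).
    assert (HdR : 0 < dR) by (unfold dR; repeat apply Rmin_glb_lt; lra).
    assert (HdRb : dR <= fst (q1 (S i')) - s) by (unfold dR; eapply Rle_trans; [apply Rmin_l|apply Rmin_l]).
    assert (HdRe : dR <= fst (q2 (S je)) - s) by (unfold dR; eapply Rle_trans; [apply Rmin_l|apply Rmin_r]).
    assert (HdRt : dR <= t - s) by (unfold dR; apply Rmin_r).
    clearbody dR.
    assert (RightF : forall ep, 0 < ep <= dR -> exists h, 0 <= h < ep /\
       (linY (q1 i) (q1 (S i)) s - linY (q2 jd) (q2 (S jd)) s) +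
          h * (slope (q1 i') (q1 (S i')) - slope (q2 je) (q2 (S je))) < 0).
    { intros ep Hep. apply NNPP. intros Hn.
      assert (Hall : forall h, 0 <= h < ep -> (linY (q1 i) (q1 (S i)) s - linY (q2 jd) (q2 (S jd)) s) +
          h * (slope (q1 i') (q1 (S i')) - slope (q2 je) (q2 (S je))) >= 0).
      { intros h Hh. destruct (Rge_dec ((linY (q1 i) (q1 (S i)) s - linY (q2 jd) (q2 (S jd)) s) +
          h * (slope (q1 i') (q1 (S i')) - slope (q2 je) (q2 (S je)))) 0) as [|Hng]; auto.
        exfalso. apply Hn. exists h. split; auto. lra. }
      assert (HS : Sset (s + ep / 2)).
      { split; [lra|]. intros x' Hx' w1 w2 Hw1 Hw2 Ew1 Ew2.
        destruct (Rlt_dec x' s). { apply (GL x'); auto; lra. }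
        assert (W1 := path_pt_leg q1 m1 w1 i' I1 Hw1 Hi2 ltac:(lra)).
        assert (W2 := path_pt_leg q2 m2 w2 je I2 Hw2 Hje ltac:(lra)).
        rewrite W1, W2. simpl. rewrite Ew1, Ew2.
        replace x' with (s + (x' - s)) by ring. rewrite !linY_shift. rewrite Y1r, Y2r.
        specialize (Hall (x' - s) ltac:(lra)). lra. }
      apply Hub in HS. lra. }
    assert (Y12' := lim2 _ _ dR HdR RightF).
    assert (YE : linY (q2 jd) (q2 (S jd)) s = linY (q1 i) (q1 (S i)) s) by lra.
    assert (SL : slope (q1 i) (q1 (S i)) <= slope (q2 jd) (q2 (S jd))).
    { specialize (LeftF dL ltac:(lra)). rewrite YE in LeftF.
      destruct (Rle_dec (slope (q1 i) (q1 (S i))) (slope (q2 jd) (q2 (S jd)))); auto. exfalso. nra. }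
    assert (SR : slope (q1 i') (q1 (S i')) < slope (q2 je) (q2 (S je))).
    { destruct (RightF dR ltac:(lra)) as [h [Hh Hneg]]. rewrite YE in Hneg.
      destruct (Rlt_dec (slope (q1 i') (q1 (S i'))) (slope (q2 je) (q2 (S je)))); auto. exfalso.
      destruct (Req_dec h 0). subst h. lra. nra. }
    set (v := (s, linY (q1 i) (q1 (S i)) s)).
    assert (Pv1 : on_path q1 m1 v) by (apply path_at_leg; auto; lra).
    assert (Pv2 : on_path q2 m2 v) by (unfold v; rewrite <- YE; apply path_at_leg; auto; lra).
    apply (surgery n sx sy sigma p q1 v i i' jd je Hopt).
    + intros j. apply sub_is_p; auto.
    + apply sub_surj; auto.
    + assert (E := N1 0%nat ltac:(lia)). rewrite Nat.sub_0_r in E. rewrite <- E, H02, H01. reflexivity.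
    + apply cost_rot; auto.
    + split.
      * destruct (le_lt_dec i i') as [|Hlt']; auto. exfalso.
        assert (fst (q1 (S i')) <= fst (q1 i)) by (apply (chain_le q1 m1 I1); lia). lra.
      * destruct (le_lt_dec i' (S i)) as [|Hlt']; auto. exfalso.
        assert (fst (q1 (S i)) < fst (q1 i')) by (apply (chain_lt q1 m1 I1); lia). lra.
    + split.
      * destruct (le_lt_dec jd je) as [|Hlt']; auto. exfalso.
        assert (fst (q2 (S je)) <= fst (q2 jd)) by (apply (chain_le q2 m2 I2); lia). lra.
      * destruct (le_lt_dec je (S jd)) as [|Hlt']; auto. exfalso.
        assert (fst (q2 (S jd)) < fst (q2 je)) by (apply (chain_lt q2 m2 I2); lia). lra.
    + destruct (le_lt_dec (i' + je + 2) sigma) as [|Hlt']; auto. exfalso.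
      assert (El1 : q1 (sigma - S je)%nat = q2 (S je)) by (symmetry; apply N1; lia).
      assert (El2 : q1 (S (sigma - S je)) = q2 je).
      { replace (S (sigma - S je)) with (sigma - je)%nat by lia. symmetry; apply N1; lia. }
      assert (fst (q1 (sigma - S je)%nat) < fst (q1 (S (sigma - S je)))) by (apply I1; lia).
      assert (fst (q2 je) < fst (q2 (S je))) by (apply I2; lia).
      rewrite El1, El2 in *. lra.
    + intros Ei. apply (path_unique q1 m1 I1); auto. apply vertex_on_path; lia.
      unfold v; simpl. subst i'. lra.
    + intros Ej. rewrite <- N1 by lia.
      apply (path_unique q2 m2 I2); auto. apply vertex_on_path; lia. unfold v; simpl. subst je. lra.
    + intros Ei. apply dist_split. unfold v. apply on_leg_lin; [apply I1; lia | lra].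
    + intros Ej. rewrite <- !N1 by lia.
      assert (Hl : on_leg (q2 jd) (q2 (S jd)) v) by (unfold v; rewrite <- YE; apply on_leg_lin; [apply I2; lia| lra]).
      pose proof (dist_split _ _ _ Hl).
      rewrite (dist_sym (q2 (S jd)) (q2 jd)), (dist_sym (q2 (S jd)) v), (dist_sym v (q2 jd)). lra.
    + destruct (Rlt_dec (dist (q1 i) (q1 (sigma - S je)%nat)) (dist (q1 i) v + dist v (q1 (sigma - S je)%nat))) as [G1|G1];
        [left; lra|].
      destruct (Rlt_dec (dist (q1 (S i')) (q1 (sigma - jd)%nat)) (dist (q1 (S i')) v + dist v (q1 (sigma - jd)%nat))) as [G2|G2];
        [right; lra|].
      exfalso. rewrite <- !N1 in G1, G2 by lia.
      apply Rnot_lt_le in G1. apply Rnot_lt_le in G2.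
      apply dist_collinear in G1. apply dist_collinear in G2.
      unfold v in G1, G2; simpl in G1, G2.
      assert (NV2 : fst (q2 je) <> fst (q2 (S je))) by (pose proof (I2 je Hje); lra).
      assert (NV1 : fst (q1 i') <> fst (q1 (S i'))) by (pose proof (I1 i' Hi2); lra).
      assert (FA : linY (q1 i) (q1 (S i)) s - snd (q1 i) = (s - fst (q1 i)) * slope (q1 i) (q1 (S i))).
      { unfold linY; ring. }
      assert (FE : snd (q2 (S je)) - linY (q1 i) (q1 (S i)) s = (fst (q2 (S je)) - s) * slope (q2 je) (q2 (S je))).
      { rewrite <- YE, <- Y2r. rewrite <- (linY_end (q2 je) (q2 (S je))) by auto. unfold linY; ring. }
      assert (FB : linY (q1 i) (q1 (S i)) s - snd (q1 (S i')) = (s - fst (q1 (S i'))) * slope (q1 i') (q1 (S i'))).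
      { rewrite <- Y1r. rewrite <- (linY_end (q1 i') (q1 (S i'))) by auto. unfold linY; ring. }
      assert (FD : snd (q2 jd) - linY (q1 i) (q1 (S i)) s = (fst (q2 jd) - s) * slope (q2 jd) (q2 (S jd))).
      { rewrite <- YE. unfold linY; ring. }
      rewrite FA, FE in G1. rewrite FB, FD in G2.
      assert (B1 : slope (q2 je) (q2 (S je)) = slope (q1 i) (q1 (S i))).
      { apply (eq_cancel ((s - fst (q1 i)) * (fst (q2 (S je)) - s))).
        - apply Rmult_lt_0_compat; lra.
        - lra. }
      assert (B2 : slope (q2 jd) (q2 (S jd)) = slope (q1 i') (q1 (S i'))).
      { apply (eq_cancel ((fst (q1 (S i')) - s) * (s - fst (q2 jd)))).
        - apply Rmult_lt_0_compat; lra.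
        - lra. }
      lra.
  }
  intros c' Hc'.
  destruct (exists_point q1 m1 c' I1) as [z [Hz Ez]].
  { rewrite H01. lra. } { rewrite H01. pose proof (chain_lt q1 m1 I1 0 m1 ltac:(lia) ltac:(lia)). lra. }
  exists z. split; auto. split; auto.
  intros z' [Hz'|Hz'] Ez'.
  - assert (z' = z) by (apply (path_unique q1 m1 I1); auto; lra). subst; lra.
  - apply (Key c'); auto.
Qed.
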